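(* Let $N$ be finite, $\mathbf P$ stochastic on $N$, $0<\beta<1$, $\mathbf R\in\mathbb R^N$, $S\subseteq N$. Let $(a_i)_{i\in N}$ and $(b_i)_{i\in N}$ be the unique solutions of $$a_i=\beta R_i+\beta\sum_{j\in S}p_{ij}a_j,\qquad b_i=\beta+\beta\sum_{j\in S}p_{ij}b_j,\qquad i\in N.$$ Then $a_i=\beta r_i^S/(1-\beta)$ and $b_i=\beta w_i^S/(1-\beta)$ for $i\in S$, and $a_i=\beta r_i^S$, $b_i=\beta w_i^S$ for $i\in S^c$. In particular $a_i/b_i=\nu_i^S$ for all $i\in N$.
   Context: $N$ finite, $\mathbf P=(p_{ij})$ stochastic, $\beta\in(0,1)$, $\mathbf R=(R_j)$; $X(t)$ the Markov chain with matrix $\mathbf P$, $\mathsf E_i$ expectation given $X(0)=i$, $S^c=N\setminus S$. For $S\subseteq N$, $\tau_S=\min\{t\ge0:X(t)\notin S\}$, $f_i^S=\mathsf{E}_i[\sum_{t=0}^{\tau_S-1}R_{X(t)}\beta^t]$, $g_i^S=\mathsf{E}_i[\sum_{t=0}^{\tau_S-1}\beta^t]$, $w_i^S=1+\beta\sum_jp_{ij}g_j^S-\beta g_i^S$, $r_i^S=R_i+\beta\sum_jp_{ij}f_j^S-\beta f_i^S$, $\nu_i^S=r_i^S/w_i^S$. *)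

(* Defs.v *)
From HB Require Import structures.
From mathcomp Require Import all_boot all_order all_algebra.
From mathcomp Require Import all_classical all_reals all_analysis.
Set Implicit Arguments. Unset Strict Implicit. Unset Printing Implicit Defensive.
Import Order.TTheory GRing.Theory Num.Theory numFieldNormedType.Exports.
Local Open Scope ring_scope.

Section Defs.
Variables (R : realType) (N : finType).

Definition stochastic (P : N -> N -> R) : Prop :=
  (forall i j, 0 <= P i j) /\ (forall i, \sum_(j : N) P i j = 1).

Definition path_prob (P : N -> N -> R) (t : nat) (x : {ffun 'I_t.+1 -> N}) : R :=
  \prod_(k < t) P (x (inord k)) (x (inord k.+1)).

(* P_i( X(0),...,X(t) all in S and X(t) = j ) = P_i( t < tau_S, X(t) = j ),
   written as the sum of the probabilities of the corresponding paths. *)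
Definition taboo_prob (P : N -> N -> R) (S : {set N}) (t : nat) (i j : N) : R :=
  \sum_(x : {ffun 'I_t.+1 -> N} |
          [&& x ord0 == i, x ord_max == j & [forall k, x k \in S]])
     path_prob P x.

(* E_i [ sum_{t=0}^{tau_S - 1} c_{X(t)} beta^t ]
   = sum_{t >= 0} beta^t E_i[ 1{t < tau_S} c_{X(t)} ]. *)
Definition disc_reward (P : N -> N -> R) (beta : R) (S : {set N}) (c : N -> R)
    (i : N) : R :=
  limn (series (fun t => beta ^+ t * \sum_(j : N) taboo_prob P S t i j * c j)).

Definition fS P beta S (Rw : N -> R) i := disc_reward P beta S Rw i.
Definition gS P beta S i := disc_reward P beta S (fun _ => 1) i.

Definition wS P beta S (i : N) : R :=
  1 + beta * \sum_(j : N) P i j * gS P beta S j - beta * gS P beta S i.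
Definition rS P beta S (Rw : N -> R) (i : N) : R :=
  Rw i + beta * \sum_(j : N) P i j * fS P beta S Rw j - beta * fS P beta S Rw i.
Definition nuS P beta S Rw (i : N) : R := rS P beta S Rw i / wS P beta S i.

End Defs.

(* Main.v *)
Require Import Defs.
From HB Require Import structures.
From mathcomp Require Import all_boot all_order all_algebra.
From mathcomp Require Import all_classical all_reals all_analysis.
From mathcomp Require Import ring lra.
Import Order.TTheory GRing.Theory Num.Theory numFieldNormedType.Exports.
Local Open Scope ring_scope.
Set Implicit Arguments. Unset Strict Implicit.
Local Open Scope classical_set_scope.

Section S.
Variables (R : realType) (N : finType).
Implicit Types (P : N -> N -> R) (S : {set N}).

Lemma taboo0 P S i j : taboo_prob P S 0 i j = ((i == j) && (i \in S))%:R.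
Proof.
rewrite /taboo_prob big_mkcond /=.
rewrite (reindex (fun k => [ffun _ : 'I_1 => k])); last first.
  exists (fun x : {ffun 'I_1 -> N} => x ord0) => x _; first by rewrite ffunE.
  apply/ffunP => m; rewrite ffunE; congr (x _); apply/val_inj; by case: m => [[]].
rewrite (bigD1 i) //= big1 ?addr0.
  rewrite !ffunE eqxx /=.

  have -> : [forall k : 'I_1, [ffun=> i] k \in S] = (i \in S).
    apply/forallP/idP => [/(_ ord0)|h k]; by rewrite ffunE.
  by case: (i == j); case: (i \in S) => //=; rewrite /path_prob big_ord0.
by move=> k /negbTE kn; rewrite ffunE kn.
Qed.

Definition ffcons t (k : N) (y : {ffun 'I_t.+1 -> N}) : {ffun 'I_t.+2 -> N} :=
  [ffun m : 'I_t.+2 => if nat_of_ord m is m'.+1 then y (inord m') else k].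
Definition fftail t (x : {ffun 'I_t.+2 -> N}) : {ffun 'I_t.+1 -> N} :=
  [ffun m : 'I_t.+1 => x (inord m.+1)].

Lemma ffconsS t k y n : (n < t.+1)%N -> @ffcons t k y (inord n.+1) = y (inord n).
Proof. by move=> h; rewrite ffunE inordK. Qed.
Lemma ffcons0 t k y : @ffcons t k y (inord 0) = k.
Proof. by rewrite ffunE inordK. Qed.
Lemma ffcons_ord0 t k y : @ffcons t k y ord0 = k.
Proof. by rewrite ffunE. Qed.

Lemma ffcons_bij t : bijective (fun p : N * {ffun 'I_t.+1 -> N} => ffcons p.1 p.2).
Proof.
exists (fun x : {ffun 'I_t.+2 -> N} => (x ord0, fftail x)).
  case=> k y /=; rewrite ffcons_ord0; congr pair; apply/ffunP => m.
  by rewrite ffunE ffconsS // inord_val.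
move=> x; apply/ffunP => m; rewrite ffunE.
case: m => [[|m] hm] /=.
  by congr (x _); apply/val_inj.
rewrite ffunE; congr (x _); apply/val_inj => /=; rewrite !inordK //.
Qed.

Lemma pp_cons P t k y : path_prob P (@ffcons t k y) = P k (y ord0) * path_prob P y.
Proof.
rewrite /path_prob big_ord_recl /= ffcons0 ffconsS //.
have -> : y (inord 0) = y ord0 by congr (y _); apply/val_inj; rewrite /= inordK.
congr (_ * _); apply: eq_bigr => m _.
have hm : (m < t)%N := ltn_ord m.
rewrite /bump leq0n add1n ffconsS; last exact: (leq_trans hm (leqnSn _)).
by rewrite ffconsS.
Qed.


Lemma ffcons_max t k y : @ffcons t k y ord_max = y ord_max.
Proof. by rewrite ffunE /=; congr (y _); apply/val_inj; rewrite /= inordK. Qed.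

Lemma ffcons_all S t k y :
  [forall m, @ffcons t k y m \in S] = (k \in S) && [forall m, y m \in S].
Proof.
apply/forallP/andP => [h|[hk /forallP hy] m].
  split; first by have := h ord0; rewrite ffcons_ord0.
  by apply/forallP => m; have := h (inord m.+1); rewrite ffconsS ?inord_val.
rewrite ffunE; case: m => [[|m] hm] //=.
Qed.

Lemma taboo_step P S t i j : taboo_prob P S t.+1 i j =
  (i \in S)%:R * \sum_k P i k * taboo_prob P S t k j.
Proof.
rewrite /taboo_prob big_mkcond (reindex _ (onW_bij _ (@ffcons_bij t))) /=.
rewrite -(pair_bigA _ (fun k y => if [&& @ffcons t k y ord0 == i, ffcons k y ord_max == j
   & [forall m, ffcons k y m \in S]] then path_prob P (@ffcons t k y) else 0)) /=.
under eq_bigr => k _ do under eq_bigr => y _ do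
  rewrite ffcons_ord0 ffcons_max ffcons_all pp_cons.
rewrite (bigD1 i) //= [X in _ + X]big1 ?addr0; last first.
  by move=> k kni; apply: big1 => y _; rewrite (negbTE kni).
under [in RHS]eq_bigr => k _ do rewrite big_mkcond mulr_sumr.
rewrite exchange_big /=.
case: (boolP (i \in S)) => hi /=; last first.
  by rewrite mul0r; apply: big1 => y _; rewrite eqxx andbF.
rewrite mul1r; apply: eq_bigr => y _.
rewrite (bigD1 (y ord0)) //= big1 ?addr0; last first.
  by move=> k /negbTE kn; rewrite eq_sym kn mulr0.
by rewrite !eqxx /=; case: ifP; rewrite ?mulr0.
Qed.


Definition Tm P S (z : N -> R) i := (i \in S)%:R * \sum_k P i k * z k.
Definition U P S (c : N -> R) t i := \sum_j taboo_prob P S t i j * c j.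

Lemma U0 P S c i : U P S c 0 i = (i \in S)%:R * c i.
Proof.
rewrite /U (bigD1 i) //= big1 ?addr0; last first.
  by move=> j /negbTE jn; rewrite taboo0 eq_sym jn mul0r.
by rewrite taboo0 eqxx.
Qed.

Lemma US P S c t i : U P S c t.+1 i = Tm P S (U P S c t) i.
Proof.
rewrite /U /Tm; under eq_bigr do rewrite taboo_step mulr_sumr mulr_suml.
rewrite exchange_big mulr_sumr; apply: eq_bigr => k _.
rewrite mulr_sumr mulr_sumr; apply: eq_bigr => j _.
by rewrite !mulrA.
Qed.

Lemma TmB P S z1 z2 i : Tm P S z1 i - Tm P S z2 i = Tm P S (fun k => z1 k - z2 k) i.
Proof.
rewrite /Tm -mulrBr -sumrB; congr (_ * _); apply: eq_bigr => k _.
by rewrite mulrBr.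
Qed.

Lemma TmZ P S (b : R) z i : b * Tm P S z i = Tm P S (fun k => b * z k) i.
Proof.
rewrite /Tm [LHS]mulrCA; congr (_ * _); rewrite mulr_sumr; apply: eq_bigr => k _.
by rewrite mulrCA.
Qed.

Lemma Tm_bound P S (M : R) z : stochastic P ->
  (forall k, `|z k| <= M) -> forall i, `|Tm P S z i| <= M.
Proof.
move=> [P0 P1] hz i; rewrite /Tm normrM.
have M0 : 0 <= M by apply: le_trans (hz i); rewrite normr_ge0.
apply: (@le_trans _ _ (`|\sum_k P i k * z k|)).
  case: (i \in S); rewrite ?normr1 ?mul1r // normr0 mul0r normr_ge0 //.
apply: le_trans (ler_norm_sum _ _ _) _.
rewrite -[M]mul1r -(P1 i) mulr_suml; apply: ler_sum => k _.
by rewrite normrM ger0_norm // ler_wpM2l.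
Qed.

Lemma disc_fix P beta S c h : stochastic P -> 0 <= beta < 1 ->
  (forall i, h i = (i \in S)%:R * (c i + beta * \sum_k P i k * h k)) ->
  forall i, disc_reward P beta S c i = h i.
Proof.
move=> sP /andP[b0 b1] hh i.
pose z n := iter n (Tm P S) h.
have hd : forall n k, z n k - U P S c n k = beta * z n.+1 k.
  elim=> [|n IH] k.
    rewrite U0 /= {1}hh /Tm; ring.
  rewrite US /= TmB TmZ /Tm; congr (_ * _); apply: eq_bigr => j _.
  by rewrite IH.
have hs : forall n, series (fun t => beta ^+ t * \sum_j taboo_prob P S t i j * c j) n
    = h i - beta ^+ n * z n i.
  elim=> [|n IH]; first by rewrite /series /= big_geq // expr0 mul1r subrr.
  rewrite seriesSr IH -/(U P S c n i).
  rewrite exprSr -mulrA -hd mulrBr opprB addrCA addrA. ring.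
pose M := \sum_k `|h k|.
have hM : forall n k, `|z n k| <= M.
  elim=> [|n IH] k /=.
    by rewrite /M (bigD1 k) //= lerDl sumr_ge0.
  exact: Tm_bound.
have H0 : (fun n => beta ^+ n * z n i) @ \oo --> 0.
  apply/norm_cvg0P.
  apply: (squeeze_cvgr (f := cst 0) (h := fun n : nat => beta ^+ n * M)). 
  - near=> n; rewrite normr_ge0 /= normrM normrX ger0_norm //.
    by rewrite ler_wpM2l // exprn_ge0.
  - exact: cvg_cst.
  - rewrite -(mul0r M); apply: cvgMr_tmp; apply: cvg_expr; rewrite ger0_norm //.
rewrite /disc_reward; apply: cvg_lim => //.
have -> : series (fun t => beta ^+ t * \sum_j taboo_prob P S t i j * c j) =
   (fun n => h i - beta ^+ n * z n i) by apply/funext => n; exact: hs.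
rewrite -[X in _ --> X]subr0; apply: cvgB => //; exact: cvg_cst.
Unshelve. all: by end_near.
Qed.


Lemma part P beta S (c a : N -> R) : stochastic P -> 0 < beta < 1 ->
  (forall i, a i = beta * c i + beta * \sum_(j in S) P i j * a j) ->
  (forall i, i \in S -> a i = beta * rS P beta S c i / (1 - beta)) /\
  (forall i, i \notin S -> a i = beta * rS P beta S c i).
Proof.
move=> sP /andP[b0 b1] ha.
have bn0 : beta != 0 by rewrite gt_eqF.
have b1n0 : 1 - beta != 0 by rewrite subr_eq0 eq_sym lt_eqF.
pose h i := (i \in S)%:R * (a i / beta).
have hq : forall i, beta * \sum_k P i k * h k = \sum_(j in S) P i j * a j.
  move=> i; rewrite mulr_sumr [RHS]big_mkcond; apply: eq_bigr => k _.
  rewrite /h; case: (k \in S); last by rewrite mul0r !mulr0.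
  by rewrite mul1r mulrCA [beta * _]mulrCA divff // mulr1.
have hh : forall i, h i = (i \in S)%:R * (c i + beta * \sum_k P i k * h k).
  move=> i; rewrite hq /h; congr (_ * _).
  rewrite ha -mulrDr mulrC mulrA mulVf // mul1r //.
have b01 : 0 <= beta < 1 by rewrite (ltW b0) b1.
have hf := disc_fix sP b01 hh.
have hr : forall i, rS P beta S c i = c i + \sum_(j in S) P i j * a j - beta * h i.
  by move=> i; rewrite /rS /fS hf -hq; under eq_bigr do rewrite hf.
split => i hi.
  rewrite hr /h hi mul1r ha; field; by rewrite b1n0.
rewrite hr /h (negbTE hi) mul0r mulr0 subr0 ha mulrDr //.
Qed.

End S.

Unset Implicit Arguments. Set Strict Implicit.
Local Close Scope classical_set_scope.

Theorem mainTheorem10 (R : realType) (N : finType) (P : N -> N -> R)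
    (beta : R) (Rw : N -> R) (S : {set N}) (a b : N -> R) :
  stochastic P -> 0 < beta < 1 ->
  (forall i, a i = beta * Rw i + beta * \sum_(j in S) P i j * a j) ->
  (forall i, b i = beta + beta * \sum_(j in S) P i j * b j) ->
  (forall i, i \in S ->
     a i = beta * rS P beta S Rw i / (1 - beta) /\
     b i = beta * wS P beta S i / (1 - beta)) /\
  (forall i, i \notin S ->
     a i = beta * rS P beta S Rw i /\ b i = beta * wS P beta S i) /\
  (forall i, a i / b i = nuS P beta S Rw i).
Proof.
move=> sP hb ha hb'.
have hb2 : forall i, b i = beta * (fun _ : N => 1) i + beta * \sum_(j in S) P i j * b j.
  by move=> i; rewrite mulr1 hb'.
have [aS aN] := part sP hb ha.
have [bS bN] := part sP hb hb2.
have wE : forall i, wS P beta S i = rS P beta S (fun _ => 1) i by [].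
move/andP: (hb) => [b0 b1].
have bn0 : beta != 0 by rewrite gt_eqF.
have b1n0 : 1 - beta != 0 by rewrite subr_eq0 eq_sym lt_eqF.
have key : forall k r w : R, k != 0 -> (k * r) / (k * w) = r / w.
  by move=> k r w kn; rewrite invfM mulrACA divff // mul1r.
split; [|split].
- by move=> i hi; rewrite aS // bS // wE.
- by move=> i hi; rewrite aN // bN // wE.
move=> i; rewrite /nuS wE; case: (boolP (i \in S)) => hi.
  rewrite aS // bS // (mulrAC beta _ (1 - beta)^-1) (mulrAC beta _ (1 - beta)^-1) key //.
  by rewrite mulf_neq0 // invr_eq0.
by rewrite aN // bN // key.
Qed.
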